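(* Let $S$ be a square-free semigroup, $D$ a division ring, and $(\alpha,\xi),(\beta,\zeta)\in Z^2(S,D^* )$. Then $D^{\beta}_{\zeta}S\cong D^{\alpha}_{\xi}S$ as rings if and only if there exists $\phi\in\mathrm{Aut}(S)$ such that $[\alpha^{\phi},\xi^{\phi}]=[\beta,\zeta]$ in the thin 2-cohomology.
   Context: $D$ is a division ring, $D^*$ its group of units, $\mathrm{Aut}(D)$ its group of ring automorphisms, $\rho_d(x)=dxd^{-1}$ for $d\in D^*$. A square-free semigroup is a semigroup $S$ (product $s\cdot t$) with zero $\theta$ and a finite set $E\subseteq S$ of nonzero pairwise orthogonal idempotents with $S=\bigcup_{e,f\in E}e\cdot S\cdot f$ and $|e\cdot S\cdot f\setminus\{\theta\}|\le 1$ for all $e,f\in E$; $S^*=S\setminus\{\theta\}$, and each $s\in S^*$ equals $e\cdot s\cdot f$ for unique $e,f\in E$. $\mathrm{Aut}(S)$ is the group of semigroup automorphisms. $S^{<0>}=E$, $S^{<n>}=\{(s_1,\dots,s_n)\in S^n:s_1\cdots s_n\ne\theta\}$, $F^n(S,G)$ is the group of functions $S^{<n>}\to G$; write $\alpha_s=\alpha(s)$, $\mu_e=\mu(e)$. A 2-cocycle is $(\alpha,\xi)\in F^1(S,\mathrm{Aut}(D))\times F^2(S,D^* )$ with $\alpha_s(\xi(t,u))\xi(s,t\cdot u)=\xi(s,t)\xi(s\cdot t,u)$ for $(s,t,u)\in S^{<3>}$ and $\alpha_s\circ\alpha_t=\rho_{\xi(s,t)}\circ\alpha_{s\cdot t}$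 for $(s,t)\in S^{<2>}$; $Z^2(S,D^* )$ is their set. $F^0(S,\mathrm{Aut}(D))\ltimes F^1(S,D^* )$ acts on $Z^2(S,D^* )$ by $(\mu,\eta)*(\alpha,\xi)=(\beta,\zeta)$ where for $s=e\cdot s\cdot f$, $t=f\cdot t\cdot g$ with $s\cdot t\ne\theta$: $\mu_e\circ\beta_s\circ\mu_f^{-1}=\rho_{\eta(s)}\circ\alpha_s$ and $\mu_e(\zeta(s,t))=\eta(s)\alpha_s(\eta(t))\xi(s,t)\eta(s\cdot t)^{-1}$. The orbits form the thin 2-cohomology, $[\alpha,\xi]$ denoting the orbit. For $\phi\in\mathrm{Aut}(S)$, $\alpha^{\phi}_s=\alpha_{\phi(s)}$, $\xi^{\phi}(s,t)=\xi(\phi(s),\phi(t))$. $D^{\alpha}_{\xi}S$ is the ring which is the left $D$-vector space with basis $S^*$ and multiplication extended by distributivity from $(d_1s)(d_2t)=d_1\alpha_s(d_2)\xi(s,t)\,(s\cdot t)$ if $s\cdot t\ne\theta$ and $0$ otherwise. *)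

(* Defs.v *)
From mathcomp Require Import all_boot all_order all_algebra.
Set Implicit Arguments. Unset Strict Implicit. Unset Printing Implicit Defensive.
Import GRing.Theory.
Local Open Scope ring_scope.

Definition division_ring (D : unitRingType) : Prop :=
  forall x : D, x != 0 -> x \is a GRing.unit.

Definition ring_aut (D : unitRingType) (f : D -> D) : Prop :=
  [/\ f 1 = 1, (forall x y, f (x + y) = f x + f y),
      (forall x y, f (x * y) = f x * f y) & bijective f].

Section SqFree.
Variables (S : finType) (mul : S -> S -> S) (th : S) (E : {set S}).

Definition square_free : Prop :=
  (forall s t u, mul (mul s t) u = mul s (mul t u)) /\
  (forall s, mul th s = th /\ mul s th = th) /\
  (forall e, e \in E -> e != th /\ mul e e = e) /\
  (forall e f, e \in E -> f \in E -> e != f -> mul e f = th) /\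
  (forall s, exists e f u, [/\ e \in E, f \in E & s = mul (mul e u) f]) /\
      (forall e f u v, e \in E -> f \in E ->
          mul (mul e u) f != th -> mul (mul e v) f != th ->
          mul (mul e u) f = mul (mul e v) f).

Definition semigroup_aut (phi : S -> S) : Prop :=
  bijective phi /\ forall s t, phi (mul s t) = mul (phi s) (phi t).

Variable D : unitRingType.

(* (alpha, xi) in Z^2(S, D^* ) ; alpha is only relevant on S^*, xi on S^<2>. *)
Definition cocycle (alpha : S -> D -> D) (xi : S -> S -> D) : Prop :=
  [/\ (forall s, s != th -> ring_aut (alpha s)),
      (forall s t, mul s t != th -> xi s t \is a GRing.unit),
      (forall s t u, mul (mul s t) u != th ->
          alpha s (xi t u) * xi s (mul t u) = xi s t * xi (mul s t) u) &
      (forall s t, mul s t != th -> forall x,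
          alpha s (alpha t x) = xi s t * alpha (mul s t) x * (xi s t)^-1)].

(* (mu, eta) * (alpha, xi) = (beta, zeta); the first equation is
   mu_e o beta_s o mu_f^-1 = rho_{eta s} o alpha_s, composed on the right with mu_f. *)
Definition acts_to (mu : S -> D -> D) (eta : S -> D)
    (alpha : S -> D -> D) (xi : S -> S -> D)
    (beta : S -> D -> D) (zeta : S -> S -> D) : Prop :=
  [/\ (forall e, e \in E -> ring_aut (mu e)),
      (forall s, s != th -> eta s \is a GRing.unit),
      (forall s e f, s != th -> e \in E -> f \in E -> mul (mul e s) f = s ->
          forall x, mu e (beta s x) = eta s * alpha s (mu f x) * (eta s)^-1) &
      (forall s t e f, mul s t != th -> e \in E -> f \in E ->
          mul (mul e s) f = s ->
          mu e (zeta s t) = eta s * alpha s (eta t) * xi s t * (eta (mul s t))^-1)].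

Definition cohomologous alpha xi beta zeta : Prop :=
  exists mu eta, acts_to mu eta alpha xi beta zeta.

(* Twisted semigroup ring D^alpha_xi S : left D-space with basis S^*. *)
Definition Sstar := {x : S | x != th}.

Definition twalg := {ffun Sstar -> D}.

Definition twmul (alpha : S -> D -> D) (xi : S -> S -> D) (x y : twalg) : twalg :=
  [ffun u : Sstar => \sum_(s : Sstar) \sum_(t : Sstar | mul (val s) (val t) == val u)
      x s * alpha (val s) (y t) * xi (val s) (val t)].

Definition twalg_iso beta zeta alpha xi : Prop :=
  exists f : twalg -> twalg,
    [/\ bijective f, (forall x y, f (x + y) = f x + f y) &
        (forall x y, f (twmul beta zeta x y) = twmul alpha xi (f x) (f y))].

End SqFree.

(* Main.v *)
Require Import Defs.
From HB Require Import structures.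
From mathcomp Require Import all_boot all_order all_algebra.
From Stdlib Require Import ClassicalEpsilon.
Set Implicit Arguments. Unset Strict Implicit. Unset Printing Implicit Defensive.
Import GRing.Theory.
Local Open Scope ring_scope.

Lemma ffunD (aT : finType) (rT : zmodType) (f g : {ffun aT -> rT}) a :
  (f + g) a = f a + g a.
Proof. by rewrite /= ffunE. Qed.
Lemma ffun0 (aT : finType) (rT : zmodType) a : (0 : {ffun aT -> rT}) a = 0.
Proof. by rewrite /= ffunE. Qed.

Section Semi.
Variables (S : finType) (mul : S -> S -> S) (th : S) (E : {set S}).
Hypothesis HS : square_free mul th E.

Lemma sA s t u : mul (mul s t) u = mul s (mul t u). Proof. by case: HS. Qed.
Lemma s0l s : mul th s = th. Proof. by case: HS => _ [H _]; case: (H s). Qed.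
Lemma s0r s : mul s th = th. Proof. by case: HS => _ [H _]; case: (H s). Qed.
Lemma E_nth e : e \in E -> e != th. Proof. by case: HS => _ [_ [H _]] /H []. Qed.
Lemma E_idem e : e \in E -> mul e e = e. Proof. by case: HS => _ [_ [H _]] /H []. Qed.
Lemma E_orth e f : e \in E -> f \in E -> e != f -> mul e f = th.
Proof. by case: HS => _ [_ [_ [H _]]]; apply: H. Qed.
Lemma decomp s : exists e f, [/\ e \in E, f \in E, mul e s = s & mul s f = s].
Proof.
case: HS => _ [_ [_ [_ [H _]]]]; have [e [f [u [eE fE ->]]]] := H s.
exists e, f; split => //; first by rewrite -!sA E_idem.
by rewrite !sA E_idem.
Qed.
Lemma Euniq e f s t : e \in E -> f \in E -> s != th -> t != th ->
  mul e s = s -> mul s f = s -> mul e t = t -> mul t f = t -> s = t.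
Proof.
case: HS => _ [_ [_ [_ [_ H]]]] eE fE sn tn es sf et tf.
have := H e f s t eE fE; rewrite es sf et tf; exact.
Qed.
Lemma luniq e e' s : e \in E -> e' \in E -> s != th -> mul e s = s -> mul e' s = s -> e = e'.
Proof.
move=> eE e'E sn es e's; apply/eqP; apply: contraR sn => ne.
have : mul e' s = th by rewrite -es -sA (E_orth e'E eE) ?s0l // eq_sym.
by rewrite e's => ->.
Qed.
Lemma runiq f f' s : f \in E -> f' \in E -> s != th -> mul s f = s -> mul s f' = s -> f = f'.
Proof.
move=> eE e'E sn es e's; apply/eqP; apply: contraR sn => ne.
have : mul s f' = th by rewrite -es sA (E_orth eE e'E) ?s0r.
by rewrite e's => ->.
Qed.
Lemma corner_id e s : e \in E -> s != th -> mul e s = s -> mul s e = s -> s = e.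
Proof.
move=> eE sn es se; apply: (Euniq eE eE sn (E_nth eE)) => //; exact: E_idem.
Qed.
End Semi.
Section Ext.
Variables (S : finType) (th : S) (D : unitRingType).
Definition ext (x : twalg th D) (s : S) : D :=
  match (insub s : option (Sstar th)) with Some u => x u | None => 0 end.
Definition dl (c : D) (s : S) : twalg th D :=
  [ffun u : Sstar th => if val u == s then c else 0].

Lemma ext_val x (u : Sstar th) : ext x (val u) = x u.
Proof. by rewrite /ext valK. Qed.
Lemma ext_th x : ext x th = 0.
Proof. by rewrite /ext insubF // eqxx. Qed.
Lemma ext_eq x y : (forall s, s != th -> ext x s = ext y s) -> x = y.
Proof. by move=> H; apply/ffunP => u; case: u => u un; rewrite -!ext_val H. Qed.
Lemma ext_dl c s t : ext (dl c s) t = if (t != th) && (t == s) then c else 0.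
Proof.
rewrite /ext; case: (insubP (Sstar th)) => [u un uv|/negbTE -> //]; by rewrite ffunE uv un.
Qed.
Lemma ext_add x y t : ext (x + y) t = ext x t + ext y t.
Proof. by rewrite /ext; case: (insubP (Sstar th)) => [u _ _|_]; rewrite ?ffunD ?addr0. Qed.
Lemma ext_zero t : ext 0 t = 0.
Proof. by rewrite /ext; case: (insubP (Sstar th)) => [u _ _|_]; rewrite ?ffun0. Qed.
Lemma ext_sum (I : Type) (r : seq I) (P : pred I) (F : I -> twalg th D) t :
  ext (\sum_(i <- r | P i) F i) t = \sum_(i <- r | P i) ext (F i) t.
Proof. exact: (big_morph (fun x => ext x t) (fun x y => ext_add x y t) (ext_zero t)). Qed.
Lemma ext_neq0 x t : ext x t != 0 -> t != th.
Proof. by apply: contraNN => /eqP ->; rewrite ext_th. Qed.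

Lemma dl_th c : dl c th = 0.
Proof. by apply/ffunP => u; rewrite !ffunE (negbTE (valP u)). Qed.
Lemma dl0 s : dl 0 s = 0.
Proof. by apply/ffunP => u; rewrite !ffunE; case: ifP. Qed.
Lemma dlD c d s : dl (c + d) s = dl c s + dl d s.
Proof. by apply/ffunP => u; rewrite ffunD !ffunE; case: ifP; rewrite ?addr0. Qed.
Lemma dl_eq0 c s : s != th -> dl c s = 0 -> c = 0.
Proof. by move=> sn /(congr1 (fun x => ext x s)); rewrite ext_dl sn eqxx ext_zero. Qed.

Lemma expand x : x = \sum_(s : S) dl (ext x s) s.
Proof.
apply: ext_eq => t tn; rewrite ext_sum (bigD1 t) //= ext_dl tn eqxx /= big1 ?addr0 //.
by move=> s st; rewrite ext_dl [t == s]eq_sym (negbTE st) andbF.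
Qed.

Lemma sum_Sstar (F : S -> D) : F th = 0 -> \sum_(s : S) F s = \sum_(u : Sstar th) F (val u).
Proof.
move=> F0; rewrite (bigD1 th) //= F0 add0r.
rewrite (reindex_omap (val : Sstar th -> S) insub); last by move=> i Pi; rewrite insubT.
by apply: eq_bigl => u; rewrite (valP u) valK eqxx.
Qed.
End Ext.
Arguments dl {S th D} c s.
Arguments ext_dl {S th D} c s t.
Arguments dl_th {S th D} c.
Arguments dl0 {S th D} s.
Arguments dlD {S th D} c d s.
Arguments dl_eq0 {S th D} c s.
Section Tw.
Variables (S : finType) (mul : S -> S -> S) (th : S) (E : {set S}).
Hypothesis HS : square_free mul th E.
Variables (D : unitRingType) (alpha : S -> D -> D) (xi : S -> S -> D).
Hypothesis Hax : cocycle mul th alpha xi.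
Local Notation tm := (@twmul S mul th D alpha xi).
Local Notation A := (twalg th D).

Lemma raut s : s != th -> ring_aut (alpha s). Proof. by case: Hax => H _ _ _; apply: H. Qed.
Lemma aD s x y : s != th -> alpha s (x + y) = alpha s x + alpha s y.
Proof. by move=> /raut []. Qed.
Lemma aM s x y : s != th -> alpha s (x * y) = alpha s x * alpha s y.
Proof. by move=> /raut []. Qed.
Lemma a1 s : s != th -> alpha s 1 = 1. Proof. by move=> /raut []. Qed.
Lemma a0 s : s != th -> alpha s 0 = 0.
Proof. by move=> sn; apply: (@addrI _ (alpha s 0)); rewrite -aD // !addr0. Qed.
Lemma a_inj s : s != th -> injective (alpha s).
Proof. by move=> /raut [_ _ _ /bij_inj]. Qed.
Lemma aV s u : s != th -> u \is a GRing.unit -> alpha s u^-1 = (alpha s u)^-1.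
Proof.
move=> sn uU; have h1 : alpha s u^-1 * alpha s u = 1 by rewrite -aM // mulVr // a1.
have h2 : alpha s u * alpha s u^-1 = 1 by rewrite -aM // mulrV // a1.
have aU : alpha s u \is a GRing.unit by apply/unitrP; exists (alpha s u^-1).
by rewrite -[LHS]mulr1 -(mulrV aU) mulrA h1 mul1r.
Qed.
Lemma xiU s t : mul s t != th -> xi s t \is a GRing.unit.
Proof. by case: Hax => _ H _ _; apply: H. Qed.
Lemma coc3 s t u : mul (mul s t) u != th ->
  alpha s (xi t u) * xi s (mul t u) = xi s t * xi (mul s t) u.
Proof. by case: Hax => _ _ H _; apply: H. Qed.
Lemma coc2 s t x : mul s t != th ->
  alpha s (alpha t x) = xi s t * alpha (mul s t) x * (xi s t)^-1.
Proof. by case: Hax => _ _ _ H st; apply: H. Qed.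
Lemma sth_l s t : mul s t != th -> s != th.
Proof. by apply: contraNN => /eqP ->; rewrite (s0l HS). Qed.
Lemma sth_r s t : mul s t != th -> t != th.
Proof. by apply: contraNN => /eqP ->; rewrite (s0r HS). Qed.

Lemma tm_app x y (u : Sstar th) : tm x y u =
  \sum_(s : S) \sum_(t : S | mul s t == val u) ext x s * alpha s (ext y t) * xi s t.
Proof.
have un := valP u.
rewrite ffunE (@sum_Sstar _ th); last first.
  by apply: big1 => t; rewrite (s0l HS) => /eqP thu; move: un; rewrite /= -thu eqxx.
apply: eq_bigr => s _; rewrite big_mkcond [RHS]big_mkcond (@sum_Sstar _ th); last first.
  by rewrite (s0r HS); case: eqP => // thu; move: un; rewrite /= -thu eqxx.
by apply: eq_bigr => t _; rewrite !ext_val.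
Qed.

Lemma tm_ext x y w : w != th -> ext (tm x y) w =
  \sum_(s : S) \sum_(t : S | mul s t == w) ext x s * alpha s (ext y t) * xi s t.
Proof.
move=> wn; pose u : Sstar th := Sub w wn.
by rewrite (_ : w = val u) // ext_val tm_app.
Qed.

Lemma tm_expand x y : tm x y =
  \sum_(s : S) \sum_(t : S) dl (ext x s * alpha s (ext y t) * xi s t) (mul s t).
Proof.
apply: ext_eq => w wn; rewrite tm_ext // ext_sum; apply: eq_bigr => s _.
rewrite ext_sum [LHS]big_mkcond; apply: eq_bigr => t _.
by rewrite ext_dl wn /= eq_sym.
Qed.

Lemma tmDl : left_distributive tm +%R.
Proof.
move=> x y z; apply/ffunP => u; rewrite ffunD !tm_app -big_split; apply: eq_bigr => s _.
rewrite -big_split; apply: eq_bigr => t _; by rewrite ext_add !mulrDl.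
Qed.
Lemma tmDr : right_distributive tm +%R.
Proof.
move=> x y z; apply/ffunP => u; rewrite ffunD !tm_app -big_split; apply: eq_bigr => s _.
rewrite -big_split; apply: eq_bigr => t _; rewrite ext_add.
case: (eqVneq s th) => [->|sn]; first by rewrite !ext_th !mul0r /= addr0.
by rewrite aD // mulrDr mulrDl.
Qed.
Lemma tm0l x : tm 0 x = 0.
Proof.
apply/ffunP => u; rewrite ffun0 tm_app big1 // => s _; rewrite big1 // => t _.
by rewrite ext_zero !mul0r.
Qed.
Lemma tm0r x : tm x 0 = 0.
Proof.
apply/ffunP => u; rewrite ffun0 tm_app big1 // => s _; rewrite big1 // => t _.
case: (eqVneq s th) => [->|sn]; first by rewrite !ext_th !mul0r.
by rewrite ext_zero a0 // mulr0 mul0r.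
Qed.
Lemma tm_suml (I : Type) (r : seq I) (P : pred I) (F : I -> A) y :
  tm (\sum_(i <- r | P i) F i) y = \sum_(i <- r | P i) tm (F i) y.
Proof. exact: (big_morph (fun x => tm x y) (fun x z => tmDl x z y) (tm0l y)). Qed.
Lemma tm_sumr (I : Type) (r : seq I) (P : pred I) (F : I -> A) y :
  tm y (\sum_(i <- r | P i) F i) = \sum_(i <- r | P i) tm y (F i).
Proof. exact: (big_morph (fun x => tm y x) (fun x z => tmDr y x z) (tm0r y)). Qed.

Lemma dl_mul c d s t : tm (dl c s) (dl d t) = dl (c * alpha s d * xi s t) (mul s t).
Proof.
case: (eqVneq s th) => [->|sn]; first by rewrite (s0l HS) !dl_th tm0l.
case: (eqVneq t th) => [->|tn]; first by rewrite (s0r HS) !dl_th tm0r.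
rewrite tm_expand (bigD1 s) //= [X in _ + X]big1 ?addr0; last first.
  move=> s' ns'; apply: big1 => t' _.
  by rewrite ext_dl (negbTE ns') andbF !mul0r dl0.
rewrite (bigD1 t) //= [X in _ + X]big1 ?addr0; last first.
  move=> t' nt'; rewrite [ext (dl d t) _]ext_dl (negbTE nt') andbF a0 // mulr0 mul0r dl0 //.
by rewrite !ext_dl sn tn !eqxx.
Qed.

Lemma assoc3 a b c s t u :
  tm (tm (dl a s) (dl b t)) (dl c u) = tm (dl a s) (tm (dl b t) (dl c u)).
Proof.
rewrite !dl_mul (sA HS) //.
case: (eqVneq (mul s (mul t u)) th) => [->|h]; first by rewrite !dl_th.
congr dl.
have stu : mul (mul s t) u != th by rewrite (sA HS).
have st : mul s t != th := sth_l stu.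
have tu : mul t u != th := sth_r h.
have sn : s != th := sth_l st.
rewrite !aM // coc2 // -!mulrA; congr (_ * (_ * _)).
rewrite coc3 // !mulrA mulrVK //; exact: xiU.
Qed.

Lemma tmA_gen (X Y Z : S -> A) :
  (forall i j k, tm (tm (X i) (Y j)) (Z k) = tm (X i) (tm (Y j) (Z k))) ->
  tm (tm (\sum_i X i) (\sum_j Y j)) (\sum_k Z k) =
  tm (\sum_i X i) (tm (\sum_j Y j) (\sum_k Z k)).
Proof.
move=> H.
rewrite [tm (\sum_i X i) (\sum_j Y j)]tm_suml tm_suml [RHS]tm_suml; apply eq_bigr => i _.
rewrite [tm (X i) (\sum_j Y j)]tm_sumr tm_suml [tm (\sum_j Y j) _]tm_suml tm_sumr.
apply eq_bigr => j _.
rewrite !tm_sumr; apply eq_bigr => k _; exact: H.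
Qed.

Lemma tmA : associative tm.
Proof.
move=> x y z; rewrite (expand x) (expand y) (expand z).
symmetry; apply: (@tmA_gen (fun s => dl (ext x s) s) (fun s => dl (ext y s) s) (fun s => dl (ext z s) s)) => i j k.
exact: assoc3.
Qed.
Lemma Ualpha e y : e \in E -> alpha e y = xi e e * y * (xi e e)^-1.
Proof.
move=> eE; have en := E_nth HS eE.
have [g _ gK] : bijective (alpha e) by case: (raut en).
have h := @coc2 e e (g y); rewrite (E_idem HS eE) in h.
by rewrite -{1}[y]gK h // gK.
Qed.
Lemma xiEU e : e \in E -> xi e e \is a GRing.unit.
Proof. by move=> eE; apply: xiU; rewrite (E_idem HS eE) (E_nth HS eE). Qed.
Lemma Uxil e s : e \in E -> s != th -> mul e s = s -> xi e s = xi e e.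
Proof.
move=> eE sn es; have en := E_nth HS eE; have ee := E_idem HS eE.
have h := @coc3 e e s; rewrite ee es in h; have {}h := h sn.
rewrite Ualpha // in h.
have U1 := xiEU eE.
have U2 : xi e s \is a GRing.unit by apply: xiU; rewrite es.
have h1 : xi e e * (xi e s * ((xi e e)^-1 * xi e s)) = xi e e * (xi e s * 1).
  by rewrite mulr1 -h !mulrA.
have h2 := mulrI U2 (mulrI U1 h1).
by rewrite -[LHS]mul1r -(mulrV U1) -mulrA h2 mulr1.
Qed.
Lemma Uxir f s : f \in E -> s != th -> mul s f = s -> xi s f = alpha s (xi f f).
Proof.
move=> fE sn sf; have ff := E_idem HS fE.
have h := @coc3 s f f; rewrite sf ff sf in h; have {}h := h sn.
have U2 : xi s f \is a GRing.unit by apply: xiU; rewrite sf.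
by apply: (mulIr U2); rewrite h.
Qed.

Definition aE e : A := dl (xi e e)^-1 e.
Definition oneA : A := \sum_(e in E) aE e.

Lemma a_dl e c s : e \in E -> mul e s = s -> tm (aE e) (dl c s) = dl c s.
Proof.
move=> eE es; rewrite /aE dl_mul es.
case: (eqVneq s th) => [->|sn]; first by rewrite !dl_th.
by rewrite Ualpha // Uxil // !mulrA mulVr ?mul1r ?mulrVK //; exact: xiEU.
Qed.
Lemma dl_a f c s : f \in E -> mul s f = s -> tm (dl c s) (aE f) = dl c s.
Proof.
move=> fE sf; rewrite /aE dl_mul sf.
case: (eqVneq s th) => [->|sn]; first by rewrite !dl_th.
have U := xiEU fE.
rewrite aV // (Uxir fE sn sf) mulrVK //.
have : alpha s (xi f f) * alpha s (xi f f)^-1 = 1 by rewrite -aM // mulrV // a1.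
by move=> h; apply/unitrP; exists (alpha s (xi f f)^-1); rewrite h -aM // mulVr // a1.
Qed.
Lemma a_dl0 e c s : e \in E -> mul e s != s -> tm (aE e) (dl c s) = 0.
Proof.
move=> eE es; rewrite /aE dl_mul.
have [e' [f [e'E _ e's _]]] := decomp HS s.
have ne : e != e' by apply: contraNneq es => ->; rewrite e's.
by rewrite -e's -(sA HS) (E_orth HS eE e'E ne) (s0l HS) dl_th.
Qed.
Lemma dl_a0 f c s : f \in E -> mul s f != s -> tm (dl c s) (aE f) = 0.
Proof.
move=> fE sf; rewrite /aE dl_mul.
have [e [f' [_ f'E _ sf']]] := decomp HS s.
have ne : f' != f by apply: contraNneq sf => <-; rewrite sf'.
by rewrite -sf' (sA HS) (E_orth HS f'E fE ne) (s0r HS) dl_th.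
Qed.

Lemma one_dl c s : tm oneA (dl c s) = dl c s.
Proof.
case: (eqVneq s th) => [->|sn]; first by rewrite dl_th tm0r.
have [e0 [f [e0E _ e0s _]]] := decomp HS s.
rewrite /oneA tm_suml (bigD1 e0) //= a_dl // [X in _ + X]big1 ?addr0 //.
move=> e /andP[eE ne]; apply: a_dl0 => //; apply: contra ne => /eqP es.
by apply/eqP; apply: (luniq HS eE e0E sn).
Qed.
Lemma dl_one c s : tm (dl c s) oneA = dl c s.
Proof.
case: (eqVneq s th) => [->|sn]; first by rewrite dl_th tm0l.
have [e [f0 [_ f0E _ sf0]]] := decomp HS s.
rewrite /oneA tm_sumr (bigD1 f0) //= dl_a // [X in _ + X]big1 ?addr0 //.
move=> f /andP[fE nf]; apply: dl_a0 => //; apply: contra nf => /eqP sf.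
by apply/eqP; apply: (runiq HS fE f0E sn).
Qed.
Lemma tm1l : left_id oneA tm.
Proof. by move=> x; rewrite {2}(expand x) {1}(expand x) tm_sumr; apply eq_bigr => s _; exact: one_dl. Qed.
Lemma tm1r : right_id oneA tm.
Proof. by move=> x; rewrite {2}(expand x) {1}(expand x) tm_suml; apply eq_bigr => s _; exact: dl_one. Qed.
Lemma a_idem e : e \in E -> tm (aE e) (aE e) = aE e.
Proof. by move=> eE; exact: (a_dl _ eE (E_idem HS eE)). Qed.
Lemma a_orth e f : e \in E -> f \in E -> e != f -> tm (aE e) (aE f) = 0.
Proof. by move=> eE fE ef; rewrite /aE dl_mul (E_orth HS eE fE ef) dl_th. Qed.
Lemma a_neq0 e : e \in E -> aE e != 0.
Proof.
move=> eE; apply/eqP => /(dl_eq0 _ _ (E_nth HS eE)) h.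
by move: (xiEU eE); rewrite -unitrV h unitr0.
Qed.

Lemma sum_neq0 (I : finType) (F : I -> D) : \sum_i F i != 0 -> exists i, F i != 0.
Proof.
case: (pickP (fun i => F i != 0)) => [i Hi|H0]; first by exists i.
by rewrite big1 ?eqxx // => i _; apply/eqP; move/negbFE: (H0 i).
Qed.

Definition inC g h (x : A) := tm (tm (aE g) x) (aE h) = x.

Lemma inC_dl g h c s : g \in E -> h \in E -> mul g s = s -> mul s h = s -> inC g h (dl c s).
Proof. by move=> gE hE gs sh; rewrite /inC a_dl // dl_a. Qed.

Lemma corner_supp g h x w : g \in E -> h \in E ->
  ext (tm (tm (aE g) x) (aE h)) w != 0 -> mul g w = w /\ mul w h = w.
Proof.
move=> gE hE; rewrite (expand x) tm_sumr tm_suml ext_sum => /sum_neq0 [s].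
rewrite /aE !dl_mul ext_dl; case: ifP => [/andP[_ /eqP ->] _|]; last by rewrite eqxx.
by split; [rewrite -!(sA HS) (E_idem HS gE) | rewrite !(sA HS) (E_idem HS hE)].
Qed.

Lemma corner_dl g h x t : g \in E -> h \in E -> inC g h x ->
  t != th -> mul g t = t -> mul t h = t -> x = dl (ext x t) t.
Proof.
move=> gE hE Hx tn gt th_; apply: ext_eq => w wn; rewrite ext_dl wn /=.
case: eqP => [->//|wt]; apply/eqP; apply: contraT => nz.
have [gw wh] : mul g w = w /\ mul w h = w by apply: (corner_supp (x := x) gE hE); rewrite /inC in Hx; rewrite Hx.
by case: (wt (Euniq HS gE hE wn tn gw wh gt th_)).
Qed.

Lemma corner_cases g h x : g \in E -> h \in E -> inC g h x ->
  x = 0 \/ exists t, [/\ t != th, mul g t = t, mul t h = t & x = dl (ext x t) t].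
Proof.
move=> gE hE Hx.
case: (pickP (fun t => (t != th) && (mul g t == t) && (mul t h == t))) => [t /andP[/andP[tn /eqP gt] /eqP th_]|H0].
  by right; exists t; split => //; apply: (corner_dl gE hE Hx).
left; apply: ext_eq => w wn; rewrite ext_zero; apply/eqP; apply: contraT => nz.
have [gw wh] : mul g w = w /\ mul w h = w by apply: (corner_supp (x := x) gE hE); rewrite /inC in Hx; rewrite Hx.
by move: (H0 w); rewrite wn gw wh !eqxx.
Qed.

Hypothesis HD : division_ring D.

Lemma corner_div g z : g \in E -> inC g g z -> z != 0 ->
  exists w, inC g g w /\ tm w z = aE g.
Proof.
move=> gE Hz zn; have gg := E_idem HS gE; have gn := E_nth HS gE.
have [z0|[t [tn gt tg zt]]] := corner_cases gE gE Hz; first by rewrite z0 eqxx in zn.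
have tg' : t = g by apply: (corner_id HS gE tn gt tg).
move: zt zn; rewrite tg' => ->; set c := ext z g => cn.
have c0 : c != 0 by apply: contraNneq cn => ->; rewrite dl0.
have ac : alpha g c != 0 by apply: contraNneq c0 => h; apply/eqP; apply: (a_inj gn); rewrite h a0.
have acU := HD ac; have U := xiEU gE.
exists (dl ((xi g g)^-1 * (xi g g)^-1 * (alpha g c)^-1) g); split.
  exact: inC_dl.
by rewrite dl_mul gg mulrVK // mulrVK.
Qed.
End Tw.
Section TwR.
Variables (S : finType) (mul : S -> S -> S) (th : S) (E : {set S}).
Variables (D : unitRingType) (alpha : S -> D -> D) (xi : S -> S -> D).
Definition tw (_ : square_free mul th E) (_ : cocycle mul th alpha xi) := twalg th D.
Variables (HS : square_free mul th E) (Hax : cocycle mul th alpha xi).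
HB.instance Definition _ := GRing.Zmodule.on (tw HS Hax).
HB.instance Definition _ := GRing.Zmodule_isPzRing.Build (tw HS Hax)
  (tmA HS Hax) (tm1l HS Hax) (tm1r HS Hax) (tmDl HS alpha xi) (tmDr HS Hax).
Lemma twmulE (x y : tw HS Hax) : x * y = twmul mul alpha xi x y. Proof. by []. Qed.
Lemma twoneE : (1 : tw HS Hax) = oneA th E xi. Proof. by []. Qed.
End TwR.

Section Ring.
Variable R : pzRingType.
Definition divc (q : R) := forall z, q * z * q = z -> z != 0 ->
  exists w, q * w * q = w /\ w * z = q.
Definition eqv (p q : R) := exists x y,
  [/\ q * x = x /\ x * p = x, p * y = y /\ y * q = y & y * x = p /\ x * y = q].

Lemma idem_corner_eq (p q x y : R) : p * p = p -> q * q = q -> divc q ->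
  q * x = x -> x * p = x -> p * y = y -> y * q = y -> y * x = p -> p != 0 -> x * y = q.
Proof.
move=> pp qq dq qx xp py yq yx pn.
have cc : (x * y) * (x * y) = x * y by rewrite mulrA -(mulrA x) yx xp.
have cn : x * y != 0.
  apply: contraNneq pn => c0; apply/eqP.
  have : p * p = y * (x * y) * x by rewrite -{1}yx -yx !mulrA.
  by rewrite c0 mulr0 mul0r pp.
have h1 : q * (x * y) * q = x * y by rewrite mulrA qx -mulrA yq.
have [w [qw wc]] := dq (x * y) h1 cn.
by rewrite -wc -{2}cc mulrA wc mulrA qx.
Qed.

Lemma eqv_of (p q : R) : p * p = p -> q * q = q -> divc p -> divc q ->
  p * q * p != 0 -> eqv p q.
Proof.
move=> pp qq dp dq nz.
have pn : p != 0 by apply: contraNneq nz => ->; rewrite !mul0r.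
have h1 : p * (p * q * p) * p = p * q * p by rewrite !mulrA pp -mulrA pp.
have [w [pw wz]] := dp (p * q * p) h1 nz.
have pw' : p * w = w by rewrite -pw !mulrA pp.
have wp : w * p = w by rewrite -pw -mulrA pp.
have e1 : q * (q * p) = q * p by rewrite mulrA qq.
have e2 : (q * p) * p = q * p by rewrite -mulrA pp.
have e3 : p * (w * q) = w * q by rewrite mulrA pw'.
have e4 : (w * q) * q = w * q by rewrite -mulrA qq.
have e5 : (w * q) * (q * p) = p.
  have : (w * q) * (q * p) = w * (p * q * p) by rewrite -mulrA (mulrA q) qq -{1}wp -!mulrA.
  by rewrite wz.
exists (q * p), (w * q); split => //; split => //.
exact: (idem_corner_eq pp qq dq e1 e2 e3 e4 e5 pn).
Qed.

Lemma eqv_sym p q : eqv p q -> eqv q p.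
Proof. by move=> [x [y [[qx xp] [py yq] [yx xy]]]]; exists y, x. Qed.
Lemma eqv_trans p q r : eqv p q -> eqv q r -> eqv p r.
Proof.
move=> [x [y [[qx xp] [py yq] [yx xy]]]] [x' [y' [[rx xq] [qy yr] [yx' xy']]]].
exists (x' * x), (y * y'); split; split.
- by rewrite mulrA rx.
- by rewrite -mulrA xp.
- by rewrite mulrA py.
- by rewrite -mulrA yr.
- by rewrite -mulrA (mulrA y') yx' qx yx.
- by rewrite -mulrA (mulrA x) xy qy xy'.
Qed.
End Ring.

Lemma eqv_map (R R' : pzRingType) (f : R -> R') p q :
  (forall x y, f (x * y) = f x * f y) -> eqv p q -> eqv (f p) (f q).
Proof.
move=> fM [x [y [[qx xp] [py yq] [yx xy]]]]; exists (f x), (f y).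
by rewrite -!fM qx xp py yq yx xy.
Qed.
Lemma divc_map (R R' : pzRingType) (f : R -> R') (fi : R' -> R) q :
  (forall x y, f (x * y) = f x * f y) -> cancel f fi -> cancel fi f ->
  f 0 = 0 -> divc q -> divc (f q).
Proof.
move=> fM fK fiK f0 dq z zq zn.
have z'q : q * fi z * q = fi z.
  by apply: (can_inj fK); rewrite !fM fiK.
have z'n : fi z != 0 by apply: contraNneq zn => h; rewrite -[z]fiK h f0.
have [w [qw wz]] := dq _ z'q z'n; exists (f w).
by rewrite -!fM qw -[z]fiK -fM wz.
Qed.
Lemma matching (T : finType) (E : {set T}) (Rl : T -> T -> bool) :
  (forall e, e \in E -> exists2 g, g \in E & Rl e g) ->
  (forall e e' g g', Rl e g -> Rl e' g -> Rl e g' -> Rl e' g') ->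
  (forall e g, e \in E -> g \in E -> Rl e g ->
     #|[set e' in E | Rl e' g]| = #|[set g' in E | Rl e g']|) ->
  exists pi : T -> T, (forall e, e \in E -> pi e \in E /\ Rl e (pi e)) /\ {in E &, injective pi}.
Proof.
move=> Hex Hbl Hcard.
pose g0 e := odflt e [pick g in E | Rl e g].
have g0P e : e \in E -> g0 e \in E /\ Rl e (g0 e).
  move=> eE; rewrite /g0; case: pickP => [g /andP[gE r]|H0] //=.
  by have [g gE r] := Hex e eE; move: (H0 g); rewrite gE r.
pose Ce e := [set e' in E | Rl e' (g0 e)].
pose Ge e := [set g' in E | Rl e g'].
have CG e : e \in E -> #|Ce e| = #|Ge e|.
  by move=> eE; have [g0E r] := g0P e eE; rewrite (Hcard e (g0 e)).
have eC e : e \in E -> e \in Ce e by move=> eE; rewrite inE eE; case: (g0P e eE).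
pose pi e := nth e (enum (Ge e)) (index e (enum (Ce e))).
have piG e : e \in E -> pi e \in Ge e.
  move=> eE; rewrite -mem_enum; apply: mem_nth.
  by rewrite -cardE -CG // cardE index_mem mem_enum eC.
exists pi; split.
  by move=> e eE; have := piG e eE; rewrite inE => /andP[].
move=> e e' eE e'E eq.
have r1 : Rl e (pi e) by have := piG e eE; rewrite inE => /andP[].
have r2 : Rl e' (pi e) by rewrite eq; have := piG e' e'E; rewrite inE => /andP[].
have GG : Ge e = Ge e'.
  by apply/setP => g; rewrite !inE; apply/andb_id2l => gE; apply/idP/idP;
     [apply: Hbl r1 r2 | apply: Hbl r2 r1].
have [g0E r0] := g0P e eE; have [g0E' r0'] := g0P e' e'E.
have r3 : Rl e (g0 e') := Hbl e' e (pi e) (g0 e') r2 r1 r0'.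
have r4 : Rl e' (g0 e) := Hbl e e' (pi e) (g0 e) r1 r2 r0.
have CC : Ce e = Ce e'.
  apply/setP => x; rewrite !inE; apply/andb_id2l => xE; apply/idP/idP => h.
    exact: (Hbl e x (g0 e) (g0 e') r0 h r3).
  exact: (Hbl e' x (g0 e') (g0 e) r0' h r4).
move: eq; rewrite /pi GG CC => eq.
have ie : (index e (enum (Ce e')) < size (enum (Ce e')))%N by rewrite index_mem mem_enum -CC eC.
have ie' : (index e' (enum (Ce e')) < size (enum (Ce e')))%N by rewrite index_mem mem_enum eC.
have sz : size (enum (Ce e')) = size (enum (Ge e')) by rewrite -!cardE CG.
have ie2 : (index e (enum (Ce e')) < size (enum (Ge e')))%N by rewrite -sz.
have := eq; rewrite (set_nth_default e' e ie2) => /eqP.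
rewrite nth_uniq ?enum_uniq -?sz // => /eqP ii.
by rewrite -(nth_index e (_ : e \in enum (Ce e'))) ?ii ?nth_index // mem_enum ?eC // -CC eC.
Qed.

Lemma rank_le (D : unitRingType) (HD : division_ring D) (I J : finType) :
  forall (Q : {set J}) (P : {set I}) (C : I -> J -> D) (M : J -> I -> D),
  (forall i i', i \in P -> i' \in P -> \sum_(j in Q) C i j * M j i' = (i == i')%:R) ->
  (#|P| <= #|Q|)%N.
Proof.
move=> Q; have [n leQn] := ubnP #|Q|; elim: n Q leQn => // n IH Q ltQ P C M H.
case: (set_0Vmem P) => [->|[i0 i0P]]; first by rewrite cards0.
have [k kQ ck] : exists2 k, k \in Q & C i0 k != 0.
  case: (pickP (fun k => (k \in Q) && (C i0 k != 0))) => [k /andP[kQ ck]|H0].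
    by exists k.
  have := H i0 i0 i0P i0P; rewrite eqxx big1 => [h|j jQ].
    by move/esym/eqP: h; rewrite /= oner_eq0.
  by move: (H0 j); rewrite jQ /= => /negbFE/eqP ->; rewrite mul0r.
have cU := HD _ ck.
pose C' i j := C i j - C i k * (C i0 k)^-1 * C i0 j.
have kQ' : k \in Q by [].
have := IH (Q :\ k) _ (P :\ i0) C' M.
rewrite (cardsD1 k Q) kQ (cardsD1 i0 P) i0P /= add1n ltnS; apply.
  by move: ltQ; rewrite (cardsD1 k Q) kQ /= add1n ltnS.
move=> i i'; rewrite !in_setD1 => /andP[ii0 iP] /andP[i'i0 i'P].
have -> : \sum_(j in Q :\ k) C' i j * M j i' = \sum_(j in Q) C' i j * M j i'.
  rewrite [RHS](bigD1 k) //= /C' mulrVK // subrr mul0r add0r.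
  by apply: eq_bigl => j; rewrite in_setD1 andbC.
rewrite /C'; under eq_bigr do rewrite mulrBl.
rewrite sumrB H //; under eq_bigr do rewrite -!mulrA.
by rewrite -mulr_sumr -mulr_sumr H // [i0 == i']eq_sym (negbTE i'i0) !mulr0 subr0.
Qed.
Lemma conj_fam (R : pzRingType) (T : finType) (E : {set T}) (p a : T -> R) (pi : T -> T) :
  (forall e, e \in E -> pi e \in E) -> {in E &, injective pi} ->
  (forall e, e \in E -> eqv (p e) (a (pi e))) ->
  (forall e f, e \in E -> f \in E -> e != f -> p e * p f = 0) ->
  (forall e f, e \in E -> f \in E -> e != f -> a e * a f = 0) ->
  \sum_(e in E) p e = 1 -> \sum_(e in E) a e = 1 ->
  exists u v : R, [/\ v * u = 1, u * v = 1 & forall e, e \in E -> u * p e * v = a (pi e)].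
Proof.
move=> piE piI Heq po ao ps as_.
pose Q e (xy : R * R) := e \in E ->
  [/\ a (pi e) * xy.1 = xy.1 /\ xy.1 * p e = xy.1,
      p e * xy.2 = xy.2 /\ xy.2 * a (pi e) = xy.2 &
      xy.2 * xy.1 = p e /\ xy.1 * xy.2 = a (pi e)].
have H' e : exists xy, Q e xy.
  case: (boolP (e \in E)) => eE; last by exists (0, 0) => h; rewrite h in eE.
  by have [x [y h]] := Heq e eE; exists (x, y).
pose F e := proj1_sig (constructive_indefinite_description _ (H' e)).
have FP e : Q e (F e) := proj2_sig (constructive_indefinite_description _ (H' e)).
have yx0 e e' : e \in E -> e' \in E -> e != e' -> (F e).2 * (F e').1 = 0.
  move=> eE e'E ne; have [[ax _] [_ ya] _] := FP e eE; have [[ax' _] _ _] := FP e' e'E.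
  have pne : pi e != pi e' by apply: contra ne => /eqP h; apply/eqP; apply: piI.
  by rewrite -ya -ax' -mulrA (mulrA (a (pi e))) (ao _ _ (piE e eE) (piE e' e'E) pne) mul0r mulr0.
have xy0 e e' : e \in E -> e' \in E -> e != e' -> (F e).1 * (F e').2 = 0.
  move=> eE e'E ne; have [[_ xp] _ _] := FP e eE; have [_ [py _] _] := FP e' e'E.
  by rewrite -xp -py -mulrA (mulrA (p e)) po ?mul0r ?mulr0.
exists (\sum_(e in E) (F e).1), (\sum_(e in E) (F e).2); split.
- rewrite -ps mulr_suml; apply: eq_bigr => e eE; rewrite mulr_sumr (bigD1 e) //=.
  rewrite big1 ?addr0; first by case: (FP e eE) => _ _ [].
  by move=> e' /andP[e'E ne]; apply: yx0; rewrite // eq_sym.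
- rewrite -as_ mulr_suml.
  transitivity (\sum_(e in E) a (pi e)).
    apply: eq_bigr => e eE; rewrite mulr_sumr (bigD1 e) //=.
    rewrite big1 ?addr0; first by case: (FP e eE) => _ _ [].
    by move=> e' /andP[e'E ne]; apply: xy0; rewrite // eq_sym.
  rewrite -(big_imset _ piI); apply: eq_bigl => g.
  suff -> : pi @: E = E by [].
  apply/eqP; rewrite eqEcard card_in_imset // leqnn andbT.
  by apply/subsetP => g' /imsetP [e eE ->]; apply: piE.
- move=> e eE; rewrite mulr_suml (bigD1 e) //= big1 ?addr0; last first.
    move=> e' /andP[e'E ne]; have [[_ xp] _ _] := FP e' e'E.
    by rewrite -xp -mulrA po ?mulr0.
  have [[_ xp] _ _] := FP e eE; rewrite xp mulr_sumr (bigD1 e) //= big1 ?addr0.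
    by case: (FP e eE) => _ _ [].
  by move=> e' /andP[e'E ne]; apply: xy0; rewrite // eq_sym.
Qed.
Definition eqvb (R : pzRingType) (p q : R) : bool :=
  if excluded_middle_informative (eqv p q) then true else false.
Lemma eqvbP (R : pzRingType) (p q : R) : reflect (eqv p q) (eqvb p q).
Proof. by rewrite /eqvb; case: excluded_middle_informative => h; constructor. Qed.

Lemma eqv_fun (R : pzRingType) (T : finType) (P : {set T}) (p q : T -> R) :
  (forall e, e \in P -> eqv (p e) (q e)) -> exists X Y : T -> R, forall e, e \in P ->
  [/\ q e * X e = X e /\ X e * p e = X e, p e * Y e = Y e /\ Y e * q e = Y e &
      Y e * X e = p e /\ X e * Y e = q e].
Proof.
move=> Heq.
pose Q e (xy : R * R) := e \in P ->
  [/\ q e * xy.1 = xy.1 /\ xy.1 * p e = xy.1,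
      p e * xy.2 = xy.2 /\ xy.2 * q e = xy.2 &
      xy.2 * xy.1 = p e /\ xy.1 * xy.2 = q e].
have H' e : exists xy, Q e xy.
  case: (boolP (e \in P)) => eE; last by exists (0, 0) => h; rewrite h in eE.
  by have [x [y h]] := Heq e eE; exists (x, y).
pose F e := proj1_sig (constructive_indefinite_description _ (H' e)).
have FP e : Q e (F e) := proj2_sig (constructive_indefinite_description _ (H' e)).
by exists (fun e => (F e).1), (fun e => (F e).2) => e eP; apply: FP.
Qed.

Section Count.
Variables (S : finType) (mul : S -> S -> S) (th : S) (E : {set S}).
Hypothesis HS : square_free mul th E.
Variables (D : unitRingType) (alpha : S -> D -> D) (xi : S -> S -> D).
Hypothesis Hax : cocycle mul th alpha xi.
Hypothesis HD : division_ring D.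
Local Notation A := (tw HS Hax).
Local Notation tm := (@twmul S mul th D alpha xi).
Definition aR g : A := aE th xi g.

Lemma aR_idem g : g \in E -> aR g * aR g = aR g.
Proof. by move=> gE; rewrite twmulE (a_idem HS Hax gE). Qed.
Lemma aR_orth g h : g \in E -> h \in E -> g != h -> aR g * aR h = 0.
Proof. by move=> gE hE gh; rewrite twmulE (a_orth HS Hax gE hE gh). Qed.
Lemma aR_sum : \sum_(g in E) aR g = 1.
Proof. by rewrite twoneE. Qed.
Lemma aR_divc g : g \in E -> divc (aR g).
Proof.
move=> gE z zq zn; have [w [wq wz]] := corner_div HS Hax HD gE zq zn.
by exists w.
Qed.
Lemma aR_neq0 g : g \in E -> aR g != 0.
Proof. exact: (a_neq0 HS Hax). Qed.

Lemma left_supp g x w : g \in E -> ext (tm (aE th xi g) x) w != 0 -> mul g w = w.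
Proof.
move=> gE; rewrite (expand x) (tm_sumr HS Hax) ext_sum => /sum_neq0 [s].
rewrite /aE (dl_mul HS Hax) ext_dl; case: ifP => [/andP[_ /eqP ->] _|]; last by rewrite eqxx.
by rewrite -(sA HS) (E_idem HS gE).
Qed.
Lemma sum_neq0' (V : zmodType) (I : finType) (P : pred I) (F : I -> V) :
  \sum_(i | P i) F i != 0 -> exists2 i, P i & F i != 0.
Proof.
case: (pickP (fun i => P i && (F i != 0))) => [i /andP[Pi Fi]|H0]; first by exists i.
by rewrite big1 ?eqxx // => i Pi; apply/eqP; move: (H0 i); rewrite Pi /= => /negbFE.
Qed.

Lemma exists_eqv (p : A) : p * p = p -> divc p -> p != 0 -> exists2 g, g \in E & eqv p (aR g).
Proof.
move=> pp dp pn.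
have : p * 1 * p != 0 by rewrite mulr1 pp.
rewrite -aR_sum mulr_sumr mulr_suml => /sum_neq0' [g gE nz].
by exists g => //; apply: eqv_of => //; [exact: aR_idem | exact: aR_divc].
Qed.

Lemma eqv_ab h g s t : h \in E -> g \in E -> s != th -> t != th ->
  mul g s = s -> mul s h = s -> mul s t = g -> eqv (aR h) (aR g).
Proof.
move=> hE gE sn tn gs sh st.
pose t' := mul (mul h t) g.
have st' : mul s t' = g by rewrite /t' -!(sA HS) sh st (E_idem HS gE).
have gn := E_nth HS gE; have hn := E_nth HS hE.
have t'n : t' != th by apply: contraNneq gn => h0; rewrite -st' h0 (s0r HS).
have ht' : mul h t' = t' by rewrite /t' -!(sA HS) (E_idem HS hE).
have t'g : mul t' g = t' by rewrite /t' (sA HS (mul h t) g g) (E_idem HS gE).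
have t'sn : mul t' s != th.
  apply: contraNneq sn => h0.
  by rewrite -gs -{1}st' (sA HS) h0 (s0r HS).
have t's : mul t' s = h.
  apply: (corner_id HS hE t'sn); first by rewrite -(sA HS) ht'.
  by rewrite (sA HS) sh.
have U : xi t' s \is a GRing.unit by apply: (xiU Hax); rewrite t's.
exists (dl 1 s : A), (dl ((xi h h)^-1 * (xi t' s)^-1) t' : A).
have qx : aR g * (dl 1 s : A) = dl 1 s by rewrite twmulE (a_dl HS Hax).
have xp : (dl 1 s : A) * aR h = dl 1 s by rewrite twmulE (dl_a HS Hax).
have py : aR h * (dl ((xi h h)^-1 * (xi t' s)^-1) t' : A) = dl ((xi h h)^-1 * (xi t' s)^-1) t'.
  by rewrite twmulE (a_dl HS Hax).
have yq : (dl ((xi h h)^-1 * (xi t' s)^-1) t' : A) * aR g = dl ((xi h h)^-1 * (xi t' s)^-1) t'.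
  by rewrite twmulE (dl_a HS Hax).
have yx : (dl ((xi h h)^-1 * (xi t' s)^-1) t' : A) * (dl 1 s : A) = aR h.
  by rewrite twmulE (dl_mul HS Hax) (a1 Hax t'n) mulr1 t's mulrVK.
split => //; split => //.
exact: (idem_corner_eq (aR_idem hE) (aR_idem gE) (aR_divc gE) qx xp py yq yx (aR_neq0 hE)).
Qed.
Lemma sum_restrict (V : zmodType) (I : finType) (Q : {set I}) (F : I -> V) :
  (forall s, s \notin Q -> F s = 0) -> \sum_(s in Q) F s = \sum_s F s.
Proof.
move=> H; rewrite [RHS](bigID (fun s => s \in Q)) /= [X in _ + X]big1 ?addr0 //.
Qed.

Lemma count_le (p : S -> A) g0 : g0 \in E ->
  (forall e f, e \in E -> f \in E -> e != f -> p e * p f = 0) ->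
  (#|[set e in E | eqvb (p e) (aR g0)]| <= #|[set h in E | eqvb (aR h) (aR g0)]|)%N.
Proof.
move=> g0E po.
set P := [set e in E | eqvb (p e) (aR g0)].
have HP e : e \in P -> eqv (p e) (aR g0) by rewrite inE => /andP[_ /eqvbP].
have [X [Y HXY]] := eqv_fun (q := fun _ => aR g0) HP.
have PE e : e \in P -> e \in E by rewrite inE => /andP[].
have XY e e' : e \in P -> e' \in P -> X e * Y e' = if e == e' then aR g0 else 0.
  move=> eP e'P; case: eqP => [<-|/eqP ne]; first by case: (HXY e eP) => _ _ [].
  have [[_ xp] _ _] := HXY e eP; have [_ [py _] _] := HXY e' e'P.
  by rewrite -xp -py -mulrA (mulrA (p e)) po ?PE // mul0r mulr0.
pose Q := [set s | (s != th) && (mul g0 s == s) && [exists t, (t != th) && (mul s t == g0)]].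
have g0n := E_nth HS g0E.
have HM e e' : e \in P -> e' \in P ->
  \sum_(s in Q) ext (X e) s * ((\sum_(t | mul s t == g0) alpha s (ext (Y e') t) * xi s t) * xi g0 g0)
   = (e == e')%:R.
  move=> eP e'P.
  have h := congr1 (fun z : A => ext z g0) (XY e e' eP e'P).
  rewrite /= twmulE (tm_ext HS alpha xi _ _ g0n) in h.
  rewrite sum_restrict; last first.
    move=> s sQ; case: (eqVneq s th) => [->|sn]; first by rewrite ext_th mul0r.
    have [[qx _] _ _] := HXY e eP.
    have qx' : twmul mul alpha xi (aE th xi g0) (X e) = X e := qx.
    case: (eqVneq (mul g0 s) s) => [gs|gs]; last first.
      suff -> : ext (X e) s = 0 by rewrite mul0r.
      apply/eqP; apply: contraNT gs => nz; apply/eqP.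
      by apply: (left_supp (x := X e) g0E); rewrite qx'.
    rewrite big1 ?mul0r ?mulr0 // => t /eqP st.
    move: sQ; rewrite inE sn gs eqxx /=; case/existsP; exists t.
    rewrite st eqxx andbT; apply: contraNneq g0n => t0.
    by rewrite -st t0 (s0r HS).
  transitivity ((\sum_s \sum_(t | mul s t == g0) ext (X e) s * alpha s (ext (Y e') t) * xi s t) * xi g0 g0).
    rewrite mulr_suml; apply: eq_bigr => s _; rewrite mulrA mulr_sumr; congr (_ * _).
    by apply: eq_bigr => t _; rewrite mulrA.
  rewrite h; case: eqP => _; last by rewrite ext_zero mul0r.
  by rewrite /aR /aE ext_dl g0n eqxx mulVr //; exact: (xiEU HS Hax).
pose r s := odflt th [pick h in E | mul s h == s].
have rP s : s != th -> r s \in E /\ mul s (r s) = s.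
  move=> sn; rewrite /r; case: pickP => [h /andP[hE /eqP sh] | H0] //=.
  have [e [f [_ fE _ sf]]] := decomp HS s; by move: (H0 f); rewrite fE sf eqxx.
have QP s : s \in Q -> [/\ s != th, mul g0 s = s & exists2 t, t != th & mul s t = g0].
  rewrite inE => /andP[/andP[sn /eqP gs] /existsP [t /andP[tn /eqP st]]]; split => //.
  by exists t.
apply: (leq_trans (rank_le HD HM)).
rewrite -(card_in_imset (f := r) (D := Q)); last first.
  move=> s s' sQ s'Q rr; have [sn gs _] := QP s sQ; have [s'n gs' _] := QP s' s'Q.
  have [rE sr] := rP s sn; have [_ s'r] := rP s' s'n; rewrite -rr in s'r.
  exact: (Euniq HS g0E rE sn s'n gs sr gs' s'r).
apply: subset_leq_card; apply/subsetP => h /imsetP [s sQ ->].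
have [sn gs [t tn st]] := QP s sQ; have [rE sr] := rP s sn.
by rewrite inE rE /=; apply/eqvbP; apply: (eqv_ab rE g0E sn tn gs sr st).
Qed.
End Count.
Lemma raut_unit (D : unitRingType) (h : D -> D) u : ring_aut h -> u \is a GRing.unit ->
  h u \is a GRing.unit.
Proof.
case=> h1 _ hM _ uU; apply/unitrP; exists (h u^-1).
by rewrite -!hM mulVr // mulrV.
Qed.
Lemma unit_neq0 (D : unitRingType) (u : D) : u \is a GRing.unit -> u != 0.
Proof. by apply: contraTneq => ->; rewrite unitr0. Qed.

Lemma dl_inj (S : finType) (th : S) (D : unitRingType) (c c' : D) u :
  u != th -> dl c u = dl c' u :> twalg th D -> c = c'.
Proof. by move=> un /(congr1 (fun z => ext z u)); rewrite !ext_dl un eqxx. Qed.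
Lemma dl_eq (S : finType) (th : S) (D : unitRingType) (c c' : D) u u' :
  u != th -> c != 0 -> dl c u = dl c' u' :> twalg th D -> u' = u /\ c' = c.
Proof.
move=> un cn /(congr1 (fun z => ext z u)); rewrite !ext_dl un eqxx /=.
by case: eqP => [->|_] // h; rewrite h eqxx in cn.
Qed.

Section Fin.
Variables (S : finType) (mul : S -> S -> S) (th : S) (E : {set S}).
Hypothesis HS : square_free mul th E.
Variables (D : unitRingType) (alpha beta : S -> D -> D) (xi zeta : S -> S -> D).
Hypotheses (Hax : cocycle mul th alpha xi) (Hbz : cocycle mul th beta zeta).
Hypothesis HD : division_ring D.
Local Notation A := (tw HS Hax).
Local Notation B := (tw HS Hbz).
Variables (g : B -> A) (gi : A -> B) (gK : cancel g gi) (giK : cancel gi g).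
Hypotheses (gD : forall x y, g (x + y) = g x + g y) (gM : forall x y, g (x * y) = g x * g y).
Variables (pi : S -> S) (piE : forall e, e \in E -> pi e \in E) (piI : {in E &, injective pi}).
Hypothesis gb : forall e, e \in E -> g (aR HS Hbz e) = aR HS Hax (pi e).

Lemma g0 : g 0 = 0.
Proof. by apply: (@addrI _ (g 0)); rewrite -gD !addr0. Qed.
Lemma gi0 : gi 0 = 0.
Proof. by rewrite -{1}g0 gK. Qed.
Lemma giM x y : gi (x * y) = gi x * gi y.
Proof. by apply: (can_inj gK); rewrite gM !giK. Qed.
Lemma g_dl_neq0 c s : s != th -> c != 0 -> g (dl c s) != 0.
Proof.
move=> sn cn; apply: contraNneq cn => h.
apply/eqP; apply: (dl_eq0 c s sn); by rewrite -[dl c s]gK h gi0.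
Qed.

Lemma g_corner c s e f : e \in E -> f \in E -> mul e s = s -> mul s f = s ->
  inC mul alpha xi (pi e) (pi f) (g (dl c s)).
Proof.
move=> eE fE es sf.
have h : aR HS Hbz e * (dl c s : B) * aR HS Hbz f = dl c s.
  by rewrite !twmulE (a_dl HS Hbz) // (dl_a HS Hbz).
by rewrite /inC -[in RHS]h !gM !gb.
Qed.

Definition phi s := odflt th [pick t | ext (g (dl 1 s)) t != 0].
Definition eta s := ext (g (dl 1 s)) (phi s).

Lemma G1 s e f : s != th -> e \in E -> f \in E -> mul e s = s -> mul s f = s ->
  [/\ phi s != th, mul (pi e) (phi s) = phi s, mul (phi s) (pi f) = phi s,
      eta s != 0 & g (dl 1 s) = dl (eta s) (phi s)].
Proof.
move=> sn eE fE es sf.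
have nz := g_dl_neq0 sn (oner_neq0 D).
have [z0|[t [tn pt tp eq]]] := corner_cases HS Hax (piE eE) (piE fE) (g_corner 1 eE fE es sf).
  by rewrite z0 eqxx in nz.
have cn : ext (g (dl 1 s)) t != 0 by apply: contraNneq nz => h; rewrite eq h dl0.
have ph : phi s = t.
  rewrite /phi; case: pickP => [t' /=|H0]; last by move: (H0 t); rewrite cn.
  by rewrite {1}eq ext_dl; case: ifP => [/andP[_ /eqP ->]|]; rewrite ?eqxx.
by rewrite /eta ph; split.
Qed.

Lemma G0 : phi th = th.
Proof.
rewrite /phi; case: pickP => [t /=|//].
by rewrite dl_th g0 ext_zero eqxx.
Qed.

Lemma G1e e : e \in E -> phi e = pi e.
Proof.
move=> eE; have ee := E_idem HS eE; have en := E_nth HS eE.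
have [pn h1 h2 _ _] := G1 en eE eE ee ee.
exact: (corner_id HS (piE eE) pn h1 h2).
Qed.

Definition mu e d := ext (g (dl (d * (zeta e e)^-1) e)) (phi e) * xi (phi e) (phi e).

Lemma G2 e d : e \in E ->
  g (dl (d * (zeta e e)^-1) e) = dl (mu e d * (xi (phi e) (phi e))^-1) (phi e).
Proof.
move=> eE; have ee := E_idem HS eE; have en := E_nth HS eE.
have [pn h1 h2 _ _] := G1 en eE eE ee ee.
have U : xi (phi e) (phi e) \is a GRing.unit by apply: (xiEU HS Hax); rewrite G1e // piE.
rewrite /mu mulrK //.
apply: (corner_dl HS Hax (piE eE) (piE eE) (g_corner _ eE eE ee ee) pn h1 h2).
Qed.

Lemma G3 d s e : s != th -> e \in E -> mul e s = s -> g (dl d s) = dl (mu e d * eta s) (phi s).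
Proof.
move=> sn eE es; have [e' [f [_ fE _ sf]]] := decomp HS s.
have [pn h1 h2 en eq] := G1 sn eE fE es sf.
have Ub := xiEU HS Hbz eE.
have peE : phi e \in E by rewrite G1e // piE.
have Ua := xiEU HS Hax peE.
have -> : dl d s = (dl (d * (zeta e e)^-1) e : B) * (dl 1 s : B).
  rewrite twmulE (dl_mul HS Hbz) es (a1 Hbz (E_nth HS eE)) mulr1 (Uxil HS Hbz) //.
  by rewrite mulrVK.
rewrite gM G2 // eq twmulE (dl_mul HS Hax) -(G1e eE) in h1 *; rewrite h1.
rewrite (Ualpha HS Hax _ peE) (Uxil HS Hax peE pn h1) !mulrA mulrVK // mulrVK //.
Qed.
Lemma phiE e : e \in E -> phi e \in E.
Proof. by move=> eE; rewrite G1e // piE. Qed.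

Definition mui e c := ext (gi (dl (c * (xi (phi e) (phi e))^-1) (phi e))) e * zeta e e.

Lemma mu_aut e : e \in E -> ring_aut (mu e).
Proof.
move=> eE; have ee := E_idem HS eE; have en := E_nth HS eE.
have peE := phiE eE; have pen := E_nth HS peE.
have Ua := xiEU HS Hax peE; have Ub := xiEU HS Hbz eE.
split.
- rewrite /mu mul1r (_ : dl _ e = aR HS Hbz e) // gb // /aR /aE G1e // ext_dl.
  by rewrite -G1e // pen eqxx /= mulVr // -G1e.
- by move=> x y; rewrite /mu mulrDl dlD gD ext_add mulrDl.
- move=> x y.
  have h : (dl (x * y * (zeta e e)^-1) e : B) = (dl (x * (zeta e e)^-1) e : B) * (dl (y * (zeta e e)^-1) e : B).
    rewrite twmulE (dl_mul HS Hbz) ee (Ualpha HS Hbz _ eE); congr dl.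
    by rewrite !mulrA !mulrVK.
  have := congr1 g h; rewrite gM !G2 // twmulE (dl_mul HS Hax) (E_idem HS peE) (Ualpha HS Hax _ peE).
  move/(dl_inj pen); rewrite !mulrA !mulrVK //.
  by move/(congr1 (fun z => z * xi (phi e) (phi e))); rewrite !mulrVK //.
- exists (mui e) => [d|c].
    rewrite /mui -G2 // gK ext_dl en eqxx /= mulrVK //.
  have hz : inC mul alpha xi (pi e) (pi e) (dl (c * (xi (phi e) (phi e))^-1) (phi e) : A).
    have pp : mul (pi e) (phi e) = phi e by rewrite G1e // (E_idem HS (piE eE)).
    have pp' : mul (phi e) (pi e) = phi e by rewrite G1e // (E_idem HS (piE eE)).
    exact: (inC_dl HS Hax _ (piE eE) (piE eE) pp pp').
  set z := dl _ (phi e) in hz *.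
  have hz' : inC mul beta zeta e e (gi z).
    rewrite /inC; change (aR HS Hbz e * gi z * aR HS Hbz e = gi z).
    have <- : gi (aR HS Hax (pi e)) = aR HS Hbz e by rewrite -gb // gK.
    by rewrite -!giM; congr gi; exact: hz.
  rewrite /mu /mui -/z mulrK // -(corner_dl HS Hbz eE eE hz' en ee ee) giK.
  by rewrite /z ext_dl pen eqxx /= mulrVK.
Qed.
Lemma unitM (u v : D) : u \is a GRing.unit -> v \is a GRing.unit -> u * v \is a GRing.unit.
Proof. by move=> uU vU; rewrite unitrMl. Qed.

Lemma eta_U s : s != th -> eta s \is a GRing.unit.
Proof.
move=> sn; have [e [f [eE fE es sf]]] := decomp HS s.
by have [_ _ _ en _] := G1 sn eE fE es sf; apply: HD.
Qed.

Lemma G4 s t : s != th -> t != th ->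
  g ((dl 1 s : B) * (dl 1 t : B)) =
  dl (eta s * alpha (phi s) (eta t) * xi (phi s) (phi t)) (mul (phi s) (phi t)).
Proof.
move=> sn tn; have [e [f [eE fE es sf]]] := decomp HS s.
have [e' [f' [e'E f'E e't tf']]] := decomp HS t.
have [_ _ _ _ eqs] := G1 sn eE fE es sf; have [_ _ _ _ eqt] := G1 tn e'E f'E e't tf'.
by rewrite gM eqs eqt twmulE (dl_mul HS Hax).
Qed.

Lemma G5 s t e : mul s t != th -> e \in E -> mul e s = s ->
  phi (mul s t) = mul (phi s) (phi t) /\
  mu e (zeta s t) * eta (mul s t) = eta s * alpha (phi s) (eta t) * xi (phi s) (phi t).
Proof.
move=> st eE es; have sn := sth_l HS st; have tn := sth_r HS st.
have est : mul e (mul s t) = mul s t by rewrite -(sA HS) es.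
have L : g ((dl 1 s : B) * (dl 1 t : B)) = dl (mu e (zeta s t) * eta (mul s t)) (phi (mul s t)).
  by rewrite twmulE (dl_mul HS Hbz) (a1 Hbz sn) mulr1 mul1r (G3 _ st eE est).
rewrite G4 // in L.
have [e0 [f0 [e0E f0E e0s s0f]]] := decomp HS (mul s t).
have [pn _ _ _ _] := G1 st e0E f0E e0s s0f.
have cn : mu e (zeta s t) * eta (mul s t) != 0.
  apply: unit_neq0; apply: unitM; last exact: eta_U.
  exact: (raut_unit (mu_aut eE) (xiU Hbz st)).
have [h1 h2] := dl_eq pn cn (esym L).
by split.
Qed.

Lemma G6 s t : s != th -> t != th -> mul s t = th -> mul (phi s) (phi t) = th.
Proof.
move=> sn tn st; have L := G4 sn tn.
rewrite twmulE (dl_mul HS Hbz) st dl_th g0 in L.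
have [e [f [eE fE es sf]]] := decomp HS s.
have [pn _ _ _ _] := G1 sn eE fE es sf.
apply/eqP; apply: contraT => nz.
have cU : eta s * alpha (phi s) (eta t) * xi (phi s) (phi t) \is a GRing.unit.
  apply: unitM; [apply: unitM; [exact: eta_U|] | exact: (xiU Hax)].
  exact: (raut_unit (raut Hax pn) (eta_U tn)).
by move: (unit_neq0 cU); rewrite (dl_eq0 _ _ nz (esym L)) eqxx.
Qed.

Lemma phi_mul s t : phi (mul s t) = mul (phi s) (phi t).
Proof.
case: (eqVneq s th) => [->|sn]; first by rewrite (s0l HS) G0 (s0l HS).
case: (eqVneq t th) => [->|tn]; first by rewrite (s0r HS) G0 (s0r HS).
case: (eqVneq (mul s t) th) => [st|st]; first by rewrite st G0 (G6 sn tn st).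
have [e [f [eE fE es sf]]] := decomp HS s.
by case: (G5 st eE es).
Qed.

Lemma phi_inj : injective phi.
Proof.
have phin s : s != th -> phi s != th.
  move=> sn; have [e [f [eE fE es sf]]] := decomp HS s.
  by case: (G1 sn eE fE es sf).
move=> s s' eq.
case: (eqVneq s th) => [s0|sn].
  apply/eqP; apply: contraT => ne; have s'n : s' != th by rewrite -s0 eq_sym.
  by move: (phin s' s'n); rewrite -eq s0 G0 eqxx.
case: (eqVneq s' th) => [s0|s'n].
  by move: (phin s sn); rewrite eq s0 G0 eqxx.
have [e [f [eE fE es sf]]] := decomp HS s.
have [e' [f' [e'E f'E es' sf']]] := decomp HS s'.
have [pn h1 h2 _ _] := G1 sn eE fE es sf.
have [_ h1' h2' _ _] := G1 s'n e'E f'E es' sf'.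
rewrite -eq in h1' h2'.
have ee : e = e' by apply: piI => //; apply: (luniq HS (piE eE) (piE e'E) pn).
have ff : f = f' by apply: piI => //; apply: (runiq HS (piE fE) (piE f'E) pn).
rewrite -ee in es'; rewrite -ff in sf'.
exact: (Euniq HS eE fE sn s'n es sf es' sf').
Qed.

Lemma phi_aut : semigroup_aut mul phi.
Proof. by split; [exact: injF_bij phi_inj | exact: phi_mul]. Qed.

Lemma phi_coh : cohomologous mul th E (fun s => alpha (phi s)) (fun s t => xi (phi s) (phi t))
  beta zeta.
Proof.
exists mu, eta; split.
- by move=> e eE; apply: mu_aut.
- exact: eta_U.
- move=> s e f sn eE fE H x.
  have es : mul e s = s.
    by move: (congr1 (mul e) H); rewrite -!(sA HS) (E_idem HS eE) H => <-.
  have sf : mul s f = s.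
    by move: (congr1 (mul^~ f) H); rewrite !(sA HS) (E_idem HS fE) -(sA HS) H => <-.
  have fn := E_nth HS fE; have ff := E_idem HS fE.
  have [pn _ h2 _ eq] := G1 sn eE fE es sf.
  have Lx y : eta s * alpha (phi s) (mu f y * eta f) * xi (phi s) (pi f) =
              mu e (beta s y * zeta s f) * eta s.
    have L : g ((dl 1 s : B) * (dl y f : B)) = g (dl (beta s y * zeta s f) s : B).
      by rewrite twmulE (dl_mul HS Hbz) sf mul1r.
    rewrite gM eq (G3 y fn fE ff) (G3 _ sn eE es) twmulE (dl_mul HS Hax) (G1e fE) h2 in L.
    exact: (dl_inj pn L).
  have [mu1 _ muM _] := mu_aut eE; have [muf1 _ _ _] := mu_aut fE.
  have L1 := Lx 1; rewrite (a1 Hbz sn) mul1r muf1 mul1r in L1.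
  have KU : alpha (phi s) (eta f) * xi (phi s) (pi f) \is a GRing.unit.
    apply: unitM; first exact: (raut_unit (raut Hax pn) (eta_U fn)).
    by apply: (xiU Hax); rewrite h2.
  have h : (eta s * alpha (phi s) (mu f x)) * (alpha (phi s) (eta f) * xi (phi s) (pi f)) =
           (mu e (beta s x) * eta s) * (alpha (phi s) (eta f) * xi (phi s) (pi f)).
    transitivity (mu e (beta s x * zeta s f) * eta s).
      by rewrite -Lx (aM Hax _ _ pn) !mulrA.
    by rewrite muM -mulrA -L1 !mulrA.
  by rewrite (mulIr KU h) mulrK //; exact: eta_U.
- move=> s t e f st eE fE H.
  have es : mul e s = s.
    by move: (congr1 (mul e) H); rewrite -!(sA HS) (E_idem HS eE) H => <-.
  have [_ h] := G5 st eE es.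
  by rewrite -h mulrK //; exact: eta_U.
Qed.
End Fin.
Section Norm.
Variables (S : finType) (mul : S -> S -> S) (th : S) (E : {set S}).
Hypothesis HS : square_free mul th E.
Variables (D : unitRingType) (alpha beta : S -> D -> D) (xi zeta : S -> S -> D).
Hypotheses (Hax : cocycle mul th alpha xi) (Hbz : cocycle mul th beta zeta).
Hypothesis HD : division_ring D.
Local Notation A := (tw HS Hax).
Local Notation B := (tw HS Hbz).
Variables (f : B -> A) (fi : A -> B) (fK : cancel f fi) (fiK : cancel fi f).
Hypotheses (fD : forall x y, f (x + y) = f x + f y) (fM : forall x y, f (x * y) = f x * f y).

Lemma normalize : exists pi : S -> S, exists u v : A,
  [/\ (forall e, e \in E -> pi e \in E), {in E &, injective pi}, v * u = 1, u * v = 1 &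
      forall e, e \in E -> u * f (aR HS Hbz e) * v = aR HS Hax (pi e)].
Proof.
have f0 : f 0 = 0 by apply: (@addrI _ (f 0)); rewrite -fD !addr0.
have fiM x y : fi (x * y) = fi x * fi y by apply: (can_inj fK); rewrite fM !fiK.
have fi0 : fi 0 = 0 by rewrite -{1}f0 fK.
have f1 : f 1 = 1.
  have h z : f 1 * z = z by rewrite -[z]fiK -fM mul1r.
  by rewrite -[f 1]mulr1 h.
pose p e := f (aR HS Hbz e).
have pidem e : e \in E -> p e * p e = p e by move=> eE; rewrite /p -fM aR_idem.
have pdiv e : e \in E -> divc (p e).
  move=> eE; apply: (divc_map fM fK fiK f0).
  exact: (@aR_divc _ _ _ _ HS _ _ _ Hbz HD e eE).
have pn0 e : e \in E -> p e != 0.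
  move=> eE; apply: contraNneq (aR_neq0 HS Hbz eE) => h.
  by apply/eqP; rewrite -[aR HS Hbz e]fK -/(p e) h fi0.
have porth e e' : e \in E -> e' \in E -> e != e' -> p e * p e' = 0.
  by move=> eE e'E ne; rewrite /p -fM aR_orth.
have psum : \sum_(e in E) p e = 1.
  by rewrite /p -(big_morph f fD f0) aR_sum f1.
pose Rl e g := eqvb (p e) (aR HS Hax g).
have Hex e : e \in E -> exists2 g, g \in E & Rl e g.
  move=> eE; have [g gE h] := exists_eqv HD (pidem e eE) (pdiv e eE) (pn0 e eE).
  by exists g => //; apply/eqvbP.
have Hbl e e' g g' : Rl e g -> Rl e' g -> Rl e g' -> Rl e' g'.
  move=> /eqvbP h1 /eqvbP h2 /eqvbP h3; apply/eqvbP.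
  exact: eqv_trans h2 (eqv_trans (eqv_sym h1) h3).
have Hcard e g : e \in E -> g \in E -> Rl e g ->
    #|[set e' in E | Rl e' g]| = #|[set g' in E | Rl e g']|.
  move=> eE gE /eqvbP r.
  have S1 : [set g' in E | Rl e g'] = [set h in E | eqvb (aR HS Hax h) (aR HS Hax g)].
    apply/setP => h; rewrite !inE; apply/andb_id2l => hE; apply/eqvbP/eqvbP => H.
      exact: eqv_trans (eqv_sym H) r.
    exact: eqv_trans r (eqv_sym H).
  have le1 := count_le HD gE porth.
  pose q h := fi (aR HS Hax h).
  have qorth h h' : h \in E -> h' \in E -> h != h' -> q h * q h' = 0.
    by move=> hE h'E ne; rewrite /q -fiM aR_orth.
  have le2 := count_le HD eE qorth.
  have S2 : [set h in E | eqvb (q h) (aR HS Hbz e)] = [set g' in E | Rl e g'].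
    apply/setP => h; rewrite !inE; apply/andb_id2l => hE; apply/eqvbP/eqvbP => H.
      by have := eqv_map fM H; rewrite /q fiK => /eqv_sym.
    by have := eqv_map fiM (eqv_sym H); rewrite /p fK.
  have S3 : [set e' in E | eqvb (aR HS Hbz e') (aR HS Hbz e)] = [set e' in E | Rl e' g].
    apply/setP => e'; rewrite !inE; apply/andb_id2l => e'E; apply/eqvbP/eqvbP => H.
      exact: eqv_trans (eqv_map fM H) r.
    by have := eqv_map fiM (eqv_trans H (eqv_sym r)); rewrite /p !fK.
  rewrite -S1 in le1; rewrite S2 S3 in le2.
  by apply/eqP; rewrite eqn_leq le1 le2.
have [pi [piP piI]] := matching Hex Hbl Hcard.
have piE e : e \in E -> pi e \in E by move=> eE; case: (piP e eE).
have Heq e : e \in E -> eqv (p e) (aR HS Hax (pi e)).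
  by move=> eE; case: (piP e eE) => _ /eqvbP.
have aorth := aR_orth HS Hax.
have [u [v [vu uv hu]]] := conj_fam piE piI Heq porth aorth psum (aR_sum HS Hax).
by exists pi, u, v; split.
Qed.
End Norm.

Lemma forward (S : finType) (mul : S -> S -> S) (th : S) (E : {set S})
  (HS : square_free mul th E) (D : unitRingType) (HD : division_ring D)
  (alpha beta : S -> D -> D) (xi zeta : S -> S -> D)
  (Hax : cocycle mul th alpha xi) (Hbz : cocycle mul th beta zeta) :
  twalg_iso mul th beta zeta alpha xi ->
  exists phi : S -> S, semigroup_aut mul phi /\
    cohomologous mul th E (fun s => alpha (phi s)) (fun s t => xi (phi s) (phi t))
      beta zeta.
Proof.
case=> f [[fi fK fiK] fD fM].
pose F : tw HS Hbz -> tw HS Hax := f.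
pose Fi : tw HS Hax -> tw HS Hbz := fi.
have FM x y : F (x * y) = F x * F y by exact: fM.
have FD x y : F (x + y) = F x + F y by exact: fD.
have [pi [u [v [piE piI vu uv hu]]]] := normalize HD fK fiK FD FM.
pose g (z : tw HS Hbz) : tw HS Hax := u * F z * v.
pose gi (z : tw HS Hax) : tw HS Hbz := Fi (v * z * u).
have gK : cancel g gi.
  by move=> z; rewrite /g /gi !mulrA vu mul1r -mulrA vu mulr1 /Fi /F fK.
have giK : cancel gi g.
  by move=> z; rewrite /g /gi /Fi /F fiK !mulrA uv mul1r -mulrA uv mulr1.
have gD x y : g (x + y) = g x + g y by rewrite /g FD mulrDr mulrDl.
have gM x y : g (x * y) = g x * g y.
  by rewrite /g FM -!mulrA (mulrA v) vu mul1r.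
have gb e : e \in E -> g (aR HS Hbz e) = aR HS Hax (pi e) by move=> eE; rewrite /g hu.
exists (phi g).
split; first exact: (phi_aut HD gK giK gD gM piE piI gb).
exact: (phi_coh HD gK giK gD gM piE gb).
Qed.
Section Back.
Variables (S : finType) (mul : S -> S -> S) (th : S) (E : {set S}).
Hypothesis HS : square_free mul th E.
Variables (D : unitRingType) (alpha beta : S -> D -> D) (xi zeta : S -> S -> D).
Hypotheses (Hax : cocycle mul th alpha xi) (Hbz : cocycle mul th beta zeta).
Variables (phi : S -> S) (Hphi : semigroup_aut mul phi).
Variables (mu : S -> D -> D) (eta : S -> D).
Hypothesis Hact : acts_to mul th E mu eta (fun s => alpha (phi s)) (fun s t => xi (phi s) (phi t))
  beta zeta.
Local Notation tA := (@twmul S mul th D alpha xi).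
Local Notation tB := (@twmul S mul th D beta zeta).

Lemma phiM s t : phi (mul s t) = mul (phi s) (phi t). Proof. by case: Hphi. Qed.
Lemma phi_bij : bijective phi. Proof. by case: Hphi. Qed.
Lemma phi_inj' : injective phi. Proof. exact: bij_inj phi_bij. Qed.
Lemma phi_th : phi th = th.
Proof.
have [pinv pK pKi] := phi_bij.
have h t : mul (phi th) t = phi th by rewrite -[t]pKi -phiM (s0l HS).
by rewrite -(h th) (s0r HS).
Qed.
Lemma phi_n s : s != th -> phi s != th.
Proof. by apply: contraNneq => h; apply/eqP; apply: phi_inj'; rewrite h phi_th. Qed.

Lemma idem_in_E t : t != th -> mul t t = t -> t \in E.
Proof.
move=> tn tt; have [e [f [eE fE et tf]]] := decomp HS t.
case: (eqVneq f e) => [fe|ne].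
  by have := corner_id HS eE tn et; rewrite -fe => /(_ tf) ->.
have : t = th by rewrite -tt -{1}tf -{2}et (sA HS) -(sA HS f) (E_orth HS fE eE ne) (s0l HS) (s0r HS).
by move/eqP; rewrite (negbTE tn).
Qed.
Lemma phiE' e : e \in E -> phi e \in E.
Proof.
move=> eE; apply: idem_in_E; first exact: phi_n (E_nth HS eE).
by rewrite -phiM (E_idem HS eE).
Qed.

Lemma mu_raut e : e \in E -> ring_aut (mu e). Proof. by case: Hact => H _ _ _; apply: H. Qed.
Lemma mu0 e : e \in E -> mu e 0 = 0.
Proof. by move=> eE; have [_ hD _ _] := mu_raut eE; apply: (@addrI _ (mu e 0)); rewrite -hD !addr0. Qed.
Lemma eta_unit s : s != th -> eta s \is a GRing.unit. Proof. by case: Hact => _ H _ _; apply: H. Qed.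
Lemma act3 s e f : s != th -> e \in E -> f \in E -> mul (mul e s) f = s ->
  forall x, mu e (beta s x) = eta s * alpha (phi s) (mu f x) * (eta s)^-1.
Proof. by case: Hact => _ _ H _; apply: H. Qed.
Lemma act4 s t e f : mul s t != th -> e \in E -> f \in E -> mul (mul e s) f = s ->
  mu e (zeta s t) = eta s * alpha (phi s) (eta t) * xi (phi s) (phi t) * (eta (mul s t))^-1.
Proof. by case: Hact => _ _ _ H; apply: H. Qed.

Lemma sumE1 (V : zmodType) (G : S -> V) s e : s != th -> e \in E -> mul e s = s ->
  \sum_(e' in E | mul e' s == s) G e' = G e.
Proof.
move=> sn eE es; rewrite (bigD1 e) ?eE ?es ?eqxx //= big1 ?addr0 //.
move=> e' /andP[/andP[e'E /eqP e's] ne]; case/eqP: ne.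
exact: (luniq HS e'E eE sn e's es).
Qed.

Definition Fb (x : twalg th D) : twalg th D :=
  \sum_(s : S) \sum_(e in E | mul e s == s) dl (mu e (ext x s) * eta s) (phi s).

Lemma Fb_ext x s e : s != th -> e \in E -> mul e s = s -> ext (Fb x) (phi s) = mu e (ext x s) * eta s.
Proof.
move=> sn eE es; have pn := phi_n sn.
rewrite /Fb ext_sum (bigD1 s) //= [X in _ + X]big1 ?addr0.
  rewrite ext_sum (sumE1 (fun e' => ext (dl (mu e' (ext x s) * eta s) (phi s)) (phi s)) sn eE es).
  by rewrite ext_dl pn eqxx.
move=> s' ns'; rewrite ext_sum big1 // => e' _; rewrite ext_dl; case: ifP => // /andP[_ /eqP h].
by case/eqP: ns'; apply: phi_inj'.
Qed.

Lemma Fb_dl c s e : s != th -> e \in E -> mul e s = s -> Fb (dl c s) = dl (mu e c * eta s) (phi s).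
Proof.
move=> sn eE es; rewrite /Fb (bigD1 s) //= [X in _ + X]big1 ?addr0.
  by rewrite (sumE1 (fun e' => dl (mu e' (ext (dl c s) s) * eta s) (phi s)) sn eE es) ext_dl sn eqxx.
move=> s' ns'; apply: big1 => e' /andP[e'E _].
by rewrite ext_dl (negbTE ns') andbF mu0 // mul0r dl0.
Qed.

Lemma Fb0 : Fb 0 = 0.
Proof.
rewrite /Fb big1 // => s _; apply: big1 => e /andP[eE _].
by rewrite ext_zero mu0 // mul0r dl0.
Qed.
Lemma Fb_th c : Fb (dl c th) = 0.
Proof. by rewrite dl_th Fb0. Qed.
Lemma FbD x y : Fb (x + y) = Fb x + Fb y.
Proof.
rewrite /Fb -big_split; apply: eq_bigr => s _; rewrite -big_split; apply: eq_bigr => e /andP[eE _].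
by have [_ hD _ _] := mu_raut eE; rewrite ext_add hD mulrDl dlD.
Qed.
Lemma Fb_sum (I : Type) (r : seq I) (P : pred I) (G : I -> twalg th D) :
  Fb (\sum_(i <- r | P i) G i) = \sum_(i <- r | P i) Fb (G i).
Proof. exact: (big_morph Fb FbD Fb0). Qed.

Lemma Fb_basis c d s t : Fb (tB (dl c s) (dl d t)) = tA (Fb (dl c s)) (Fb (dl d t)).
Proof.
case: (eqVneq s th) => [->|sn]; first by rewrite dl_th Fb0 (tm0l HS) Fb0 (tm0l HS).
case: (eqVneq t th) => [->|tn]; first by rewrite dl_th Fb0 (tm0r HS Hbz) Fb0 (tm0r HS Hax).
have [e [f [eE fE es sf]]] := decomp HS s.
have [e' [f' [e'E f'E e't tf']]] := decomp HS t.
rewrite (Fb_dl _ sn eE es) (Fb_dl _ tn e'E e't) (dl_mul HS Hbz) (dl_mul HS Hax) -phiM.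
case: (eqVneq (mul s t) th) => [->|st]; first by rewrite Fb_th phi_th dl_th.
have fe : f = e'.
  apply/eqP; apply: contraNT st => ne.
  by rewrite -sf -e't (sA HS) -(sA HS f) (E_orth HS fE e'E ne) (s0l HS) (s0r HS).
rewrite -fe in e't.
have est : mul e (mul s t) = mul s t by rewrite -(sA HS) es.
have esf : mul (mul e s) f = s by rewrite es sf.
rewrite (Fb_dl _ st eE est); congr dl.
have [_ _ muM _] := mu_raut eE.
rewrite !muM (act3 sn eE fE esf) (act4 st eE fE esf).
have U := eta_unit sn; have U' := eta_unit st.
have pn := phi_n sn.
by rewrite (aM Hax _ _ pn) !mulrA mulrVK // mulrVK // fe.
Qed.
Lemma FbM x y : Fb (tB x y) = tA (Fb x) (Fb y).
Proof.
rewrite (expand x) (expand y) (tm_suml HS beta zeta) Fb_sum.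
rewrite [Fb (\sum_s _)]Fb_sum [Fb (\sum_s dl (ext y s) s)]Fb_sum (tm_suml HS alpha xi).
apply: eq_bigr => s _; rewrite (tm_sumr HS Hbz) Fb_sum (tm_sumr HS Hax).
apply: eq_bigr => t _; exact: Fb_basis.
Qed.

Lemma Fb_inj : injective Fb.
Proof.
move=> x y eq; apply: ext_eq => s sn.
have [e [f [eE fE es sf]]] := decomp HS s.
have := congr1 (fun z => ext z (phi s)) eq; rewrite /= !(Fb_ext _ sn eE es).
move/(mulIr (eta_unit sn)).
by have [_ _ _ /bij_inj] := mu_raut eE; apply.
Qed.

Lemma Fb_surj y : exists x, Fb x == y.
Proof.
suff [x h] : exists x, Fb x = y by exists x; rewrite h.
rewrite (expand y); apply: (big_ind (fun z => exists x, Fb x = z)).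
- by exists 0; rewrite Fb0.
- by move=> a b [x1 h1] [x2 h2]; exists (x1 + x2); rewrite FbD h1 h2.
move=> t _; case: (eqVneq t th) => [->|tn]; first by exists 0; rewrite dl_th Fb0.
have [pinv pK pKi] := phi_bij.
have sn : pinv t != th by apply: contraNneq tn => h; rewrite -(pKi t) h phi_th.
have [e [f [eE fE es sf]]] := decomp HS (pinv t).
have [_ _ _ [minv mK mKi]] := mu_raut eE.
exists (dl (minv (ext y t * (eta (pinv t))^-1)) (pinv t)).
by rewrite (Fb_dl _ sn eE es) mKi mulrVK ?pKi //; exact: eta_unit.
Qed.
End Back.

Lemma backward (S : finType) (mul : S -> S -> S) (th : S) (E : {set S})
  (HS : square_free mul th E) (D : unitRingType)
  (alpha beta : S -> D -> D) (xi zeta : S -> S -> D)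
  (Hax : cocycle mul th alpha xi) (Hbz : cocycle mul th beta zeta) :
  (exists phi : S -> S, semigroup_aut mul phi /\
    cohomologous mul th E (fun s => alpha (phi s)) (fun s t => xi (phi s) (phi t))
      beta zeta) ->
  twalg_iso mul th beta zeta alpha xi.
Proof.
case=> phi [Hphi [mu [eta Hact]]].
pose F := @Fb S mul th E D phi mu eta.
have Fsurj := Fb_surj HS Hphi Hact.
exists F; split.
- pose G y := xchoose (Fsurj y).
  exists G => [x|y].
    apply: (Fb_inj HS Hphi Hact); exact/eqP/(xchooseP (Fsurj (F x))).
  exact/eqP/(xchooseP (Fsurj y)).
- exact: (FbD Hact).
- exact: (FbM HS Hax Hbz Hphi Hact).
Qed.

Theorem mainTheorem3 (S : finType) (mul : S -> S -> S) (th : S) (E : {set S})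
  (HS : square_free mul th E)
  (D : unitRingType) (HD : division_ring D)
  (alpha beta : S -> D -> D) (xi zeta : S -> S -> D)
  (Hax : cocycle mul th alpha xi) (Hbz : cocycle mul th beta zeta) :
  twalg_iso mul th beta zeta alpha xi <->
  exists phi : S -> S, semigroup_aut mul phi /\
    cohomologous mul th E (fun s => alpha (phi s)) (fun s t => xi (phi s) (phi t))
      beta zeta.
Proof.
split; first exact: (forward HS HD Hax Hbz).
exact: (backward HS Hax Hbz).
Qed.
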